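(* Let $n,m\in\mathbb{N}$ and $f:\mathbb{F}_2^n\to\mathbb{F}_2$. Then for every $\mathbf{z}\in\mathbb{F}_2^n$, $$C^{(m)}_f(\mathbf{z})=\zeta_m^{wt(\mathbf{z})}\sum_{\mathbf{u}\in\mathbb{F}_2^n}\left|\mathcal{H}^{(m)}_f(\mathbf{u})\right|^2(-1)^{\mathbf{u}\cdot\mathbf{z}}.$$
   Context: $\zeta_m=e^{2\pi i/m}$; $wt$ is Hamming weight; $\mathbf{x}\cdot\mathbf{y}=\bigoplus_i x_iy_i\in\mathbb{F}_2$; $\mathbf{x}\odot\mathbf{y}=\sum_i x_iy_i$ computed in the integers. The $m$-Hadamard transform is $\mathcal{H}^{(m)}_f(\boldsymbol{\omega})=2^{-n/2}\sum_{\mathbf{x}\in\mathbb{F}_2^n}(-1)^{f(\mathbf{x})\oplus\mathbf{x}\cdot\boldsymbol{\omega}}\zeta_m^{wt(\mathbf{x})}$, and the $m$-autocorrelation is $C^{(m)}_{f}(\mathbf{y})=\sum_{\mathbf{x}\in\mathbb{F}_2^n}(-1)^{f(\mathbf{x})\oplus f(\mathbf{x}\oplus\mathbf{y})}(\zeta_m^2)^{\mathbf{x}\odot\mathbf{y}}$. *)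

(* Defs.v *)
From HB Require Import structures.
From mathcomp Require Import all_boot all_order all_algebra.
From mathcomp Require Import all_classical all_reals all_analysis.
From mathcomp Require Import complex.
Set Implicit Arguments. Unset Strict Implicit. Unset Printing Implicit Defensive.
Import Order.TTheory GRing.Theory Num.Theory.
Local Open Scope ring_scope.
Local Open Scope complex_scope.

(* Vectors of F_2^n are represented as finite boolean functions on 'I_n;
   the field F_2 is bool with xor (addb) as addition and && as product. *)
Notation bvec n := {ffun 'I_n -> bool}.

Definition wt n (x : bvec n) : nat := #|[set i | x i]|.

Definition dotb n (x y : bvec n) : bool := \big[addb/false]_(i < n) (x i && y i).

Definition dotz n (x y : bvec n) : nat := \sum_(i < n) (x i && y i : nat).

Definition sgnb (R : realType) (b : bool) : R[i] := (-1) ^+ b.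

Definition zeta (R : realType) (m : nat) : R[i] :=
  (cos (2 * pi / m%:R))%:C + 'i * (sin (2 * pi / m%:R))%:C.

Definition mHadamard (R : realType) (m n : nat) (f : bvec n -> bool) (w : bvec n) : R[i] :=
  ((Num.sqrt (2%:R ^+ n : R))^-1)%:C *
    \sum_(x : bvec n) sgnb R (f x (+) dotb x w) * zeta R m ^+ wt x.

Definition mAutocorr (R : realType) (m n : nat) (f : bvec n -> bool) (y : bvec n) : R[i] :=
  \sum_(x : bvec n) sgnb R (f x (+) f [ffun i => x i (+) y i]) * (zeta R m ^+ 2) ^+ dotz x y.

(* Main.v *)
Require Import Defs.
From HB Require Import structures.
From mathcomp Require Import all_boot all_order all_algebra.
From mathcomp Require Import all_classical all_reals all_analysis.
From mathcomp Require Import complex.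
Import Order.TTheory GRing.Theory Num.Theory.
Local Open Scope ring_scope.
Local Open Scope complex_scope.
From mathcomp Require Import ring.
Set Implicit Arguments.
Definition xorv n (x y : {ffun 'I_n -> bool}) : {ffun 'I_n -> bool} :=
  [ffun i => x i (+) y i].

Lemma sgnbD (R : realType) a b : sgnb R (a (+) b) = sgnb R a * sgnb R b.
Proof. by rewrite /sgnb signr_addb. Qed.

Lemma dotb_xor n (u x y : {ffun 'I_n -> bool}) :
  dotb u (xorv x y) = dotb u x (+) dotb u y.
Proof.
rewrite /dotb -big_split /=; apply: eq_bigr => i _.
by rewrite ffunE andb_addr.
Qed.

Lemma dotbC n (x y : {ffun 'I_n -> bool}) : dotb x y = dotb y x.
Proof. by rewrite /dotb; apply: eq_bigr => i _; rewrite andbC. Qed.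

Lemma wt_sum n (x : {ffun 'I_n -> bool}) : wt x = (\sum_i (x i : nat))%N.
Proof.
rewrite /wt -sum1_card big_mkcond /=; apply: eq_bigr => i _.
by rewrite inE; case: (x i).
Qed.

Lemma wt_xor n (x z : {ffun 'I_n -> bool}) :
  (wt x + wt z = wt (xorv x z) + 2 * dotz x z)%N.
Proof.
rewrite !wt_sum /dotz -big_split /= big_distrr -big_split /=.
apply: eq_bigr => i _; rewrite ffunE.
by case: (x i); case: (z i).
Qed.

Lemma char_sum (R : realType) n (w : {ffun 'I_n -> bool}) :
  \sum_(u : {ffun 'I_n -> bool}) sgnb R (dotb u w) =
  if w == [ffun => false] then (2 ^ n)%:R else 0.
Proof.
case: eqP => [->|/eqP hw].
  rewrite (eq_bigr (fun _ => 1)); last first.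
    move=> u _; rewrite /dotb big1 // => i _; by rewrite ffunE andbF.
  by rewrite sumr_const card_ffun card_bool card_ord.
have [i wi] : exists i, w i.
  apply/existsP; apply: contraNT hw; rewrite negb_exists => /forallP h.
  by apply/eqP/ffunP => j; rewrite ffunE; apply/negbTE/h.
set e : {ffun 'I_n -> bool} := [ffun j => j == i].
have inj : injective (fun u => xorv u e).
  move=> a b /ffunP h; apply/ffunP => j; move: (h j); rewrite !ffunE.
  by case: (a j); case: (b j); case: (j == i).
set S := \sum_u _.
have hS : S = - S.
  rewrite {1}/S (reindex_inj inj) /= /S -sumrN; apply: eq_bigr => u _.
  rewrite dotbC dotb_xor sgnbD.
  have -> : dotb w e = true.
    rewrite /dotb (bigD1 i) //= big1 ?ffunE ?eqxx ?wi ?andbT //.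
    by move=> j /negbTE hj; rewrite ffunE hj andbF.
  by rewrite (dotbC w u) /sgnb /= mulrN1.
have : S *+ 2 == 0 by rewrite mulr2n {1}hS addNr.
by rewrite mulrn_eq0 /= => /eqP.
Qed.

Lemma zetaJ (R : realType) m : zeta R m * (zeta R m)^* = 1.
Proof.
set c := cos (2 * pi / m%:R : R); set s := sin (2 * pi / m%:R : R).
have -> : zeta R m = c +i* s.
  apply/eqP; rewrite eq_complex /=; apply/andP; split; apply/eqP; rewrite /c /s; ring.
have -> : (1 : R[i]) = (c ^+ 2 + s ^+ 2) +i* 0 by rewrite cos2Dsin2.
rewrite /=. apply/eqP. simpc. by rewrite !expr2 [s * c]mulrC addNr !eqxx.
Qed.

Lemma sgnbJ (R : realType) b : (sgnb R b)^* = sgnb R b.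
Proof. by rewrite /sgnb rmorphXn rmorphN1. Qed.

Lemma normsq (R : realType) (x : R[i]) : `|x| ^+ 2 = x * x^*.
Proof. by rewrite normcE sqr_sqrtc. Qed.

Theorem corollary1 (R : realType) (n m : nat) (hm : (0 < m)%N)
  (f : {ffun 'I_n -> bool} -> bool) (z : {ffun 'I_n -> bool}) :
  mAutocorr R m f z =
  zeta R m ^+ wt z *
    \sum_(u : {ffun 'I_n -> bool}) `|mHadamard R m f u| ^+ 2 * sgnb R (dotb u z).
Proof.
set k : R[i] := ((Num.sqrt (2%:R ^+ n : R))^-1)%:C.
pose A x : R[i] := sgnb R (f x) * zeta R m ^+ wt x.
have H1 u : mHadamard R m f u = k * \sum_x A x * sgnb R (dotb x u).
  rewrite /mHadamard; congr (_ * _); apply: eq_bigr => x _.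
  by rewrite sgnbD /A; ring.
have H2 u : `|mHadamard R m f u| ^+ 2 * sgnb R (dotb u z) =
   k * k^* * \sum_x \sum_y A x * (A y)^* * sgnb R (dotb u (xorv (xorv x y) z)).
  rewrite normsq H1 rmorphM rmorph_sum /=.
  have -> : forall a b c d e : R[i], a*b*(c*d)*e = a*c*(b*d*e) by move=> *; ring.
  congr (_ * _).
  rewrite mulr_suml mulr_suml; apply: eq_bigr => x _.
  rewrite mulr_sumr mulr_suml; apply: eq_bigr => y _.
  rewrite rmorphM {2}/sgnb rmorphXn rmorphN1 -/(sgnb R _) !dotb_xor !sgnbD (dotbC u x) (dotbC u y); ring.
rewrite (eq_bigr _ (fun u _ => H2 u)).
rewrite -big_distrr /= exchange_big /=.
under eq_bigr do rewrite exchange_big /=.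
have Hc x y : (xorv (xorv x y) z == [ffun => false]) = (y == xorv x z).
  apply/eqP/eqP => /ffunP h; apply/ffunP => i; move: (h i); rewrite !ffunE;
  by case: (x i); case: (y i); case: (z i).
have H3 x : \sum_y \sum_u A x * (A y)^* * sgnb R (dotb u (xorv (xorv x y) z))
   = A x * (A (xorv x z))^* * (2 ^ n)%:R.
  rewrite (bigD1 (xorv x z)) //= [X in _ + X]big1 ?addr0.
    by rewrite -big_distrr /= char_sum Hc eqxx.
  by move=> y /negbTE hy; rewrite -big_distrr /= char_sum Hc hy mulr0.
under eq_bigr do rewrite H3.
have hk : k * k^* * (2 ^ n)%:R = 1.
  rewrite (conj_Creal (ger0_real _)); last by rewrite /k ler0c invr_ge0 sqrtr_ge0.
  rewrite /k -rmorphM -expr2 exprVn sqr_sqrtr ?exprn_ge0 ?ler0n //.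
  by rewrite -(rmorph_nat (real_complex R)) -rmorphM natrX mulVf ?rmorph1 // expf_neq0 // pnatr_eq0.
have hS : \sum_i A i * (A (xorv i z))^* * (2 ^ n)%:R = (\sum_i A i * (A (xorv i z))^*) * (2^n)%:R.
  by rewrite mulr_suml.
rewrite hS.
change (mAutocorr R m f z = zeta R m ^+ wt z * (k * k^* * ((\sum_i A i * (A (xorv i z))^*) * (2 ^ n)%:R))).
rewrite [X in _ * X]mulrCA hk mulr1 mulr_sumr /mAutocorr; apply: eq_bigr => x _.
rewrite /A.
have key : zeta R m ^+ wt z * zeta R m ^+ wt x * (zeta R m)^* ^+ wt (xorv x z) = zeta R m ^+ 2 ^+ dotz x z.
  by rewrite -exprD addnC wt_xor exprD mulrAC -exprMn zetaJ expr1n mul1r exprM.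
rewrite rmorphM rmorphXn {2}/sgnb rmorphXn rmorphN1 sgnbD.
set c := (X in _ = _ * (_ * (_ * X))).
have key' : zeta R m ^+ wt z * zeta R m ^+ wt x * c = zeta R m ^+ 2 ^+ dotz x z by exact: key.
rewrite -key' -/(sgnb R (f (xorv x z))) /xorv -/(sgnb R (f x)).
clear key key'; move: (sgnb R (f x)) (sgnb R _) (zeta R m ^+ wt z) (zeta R m ^+ wt x) c => a b p q r.
rewrite -!mulrA [RHS]mulrCA; congr (_ * _).
by rewrite mulrCA [X in _ * X = _]mulrCA.
Qed.
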